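(* Let $d\le3$. For all $E>0$ and $\tau\in[0,4-d)$ there exists a constant $C_{E,\tau}$, uniformly bounded for $E$ in compact subsets of $(0,\infty)$, such that for all $L\ge1$ and all $\eta>0$, $$\int_{\Lambda_L^*}\frac{\langle a\rangle^\tau}{|a^2-E-i\eta|^2}da\le C_{E,\tau}(1+\eta^{-2}).$$
   Context: $\Lambda_L=[-L/2,L/2)^d$, $\Lambda_L^*=(\frac1L\mathbb Z)^d$, $\int_{\Lambda_L^*}g(a)da:=|\Lambda_L|^{-1}\sum_{a\in\Lambda_L^*}g(a)$; $a^2=|a|^2$ and $\langle a\rangle=(1+|a|^2)^{1/2}$. *)

(* Defs.v *)
From HB Require Import structures.
From mathcomp Require Import all_boot all_order all_algebra.
From mathcomp Require Import all_classical all_reals all_analysis.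
Set Implicit Arguments. Unset Strict Implicit. Unset Printing Implicit Defensive.
Import Order.TTheory GRing.Theory Num.Theory.
Local Open Scope ring_scope.
Local Open Scope classical_set_scope.

(* A point of the dual lattice Lambda_L^* = (Z/L)^d is a = k / L with k in Z^d. *)
Definition latsq (R : realType) (d : nat) (L : R) (k : {ffun 'I_d -> int}) : R :=
  \sum_(i < d) ((k i)%:~R / L) ^+ 2.

(* The integrand  <a>^tau / |a^2 - E - i eta|^2,  with
   <a>^tau = (1 + |a|^2)^(tau/2)  and  |x + i y|^2 = x^2 + y^2. *)
Definition integrand (R : realType) (d : nat) (L E eta tau : R)
    (k : {ffun 'I_d -> int}) : R :=
  (1 + latsq L k) `^ (tau / 2) / ((latsq L k - E) ^+ 2 + eta ^+ 2).

(* \int_{Lambda_L^*} g(a) da := |Lambda_L|^{-1} sum_{a in Lambda_L^*} g(a),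
   |Lambda_L| = L^d; the (possibly infinite) sum of nonnegative terms is the
   extended-real valued esum. *)
Definition lat_integral (R : realType) (d : nat) (L E eta tau : R) : \bar R :=
  ((L ^+ d)^-1)%:E *
  (\esum_(k in [set: {ffun 'I_d -> int}]) (integrand L E eta tau k)%:E)%E.

(* Main.v *)
Require Import Defs.
From mathcomp Require Import all_boot all_order all_algebra.
From mathcomp Require Import all_classical all_reals all_analysis.
From mathcomp Require Import ring lra zify.
Import Order.TTheory GRing.Theory Num.Theory.
Local Open Scope ring_scope.
Set Implicit Arguments.

Section S.
Variable R : realType.

Lemma bern (q v : R) : 1 <= q -> 0 < v -> v * (1 - q^-1) <= q `^ v - 1.
Proof.
move=> q1 v0.
have q0 : 0 < q by lra.
have hl : 1 - q^-1 <= ln q.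
  have qi0 : 0 < q^-1 by rewrite invr_gt0.
  have := @le_ln1Dx R (q^-1 - 1).
  rewrite addrCA subrr addr0 lnV ?posrE// => /(_ ltac:(lra)). lra.
rewrite /powR gt_eqF//.
have := expR_ge1Dx (v * ln q).
have : v * (1 - q^-1) <= v * ln q by rewrite ler_pM2l.
lra.
Qed.

Lemma tele_step (y z v : R) : 1 <= z -> z <= y -> 0 < v ->
  v * (y - z) / y `^ (v + 1) <= (z `^ v)^-1 - (y `^ v)^-1.
Proof.
move=> z1 zy v0.
have z0 : 0 < z by lra.
have y0 : 0 < y by lra.
have hq : 1 <= y / z by rewrite ler_pdivlMr// mul1r.
have := @bern (y/z) v hq v0.
have Y0 : 0 < y `^ v by apply: powR_gt0.
have Z0 : 0 < z `^ v by apply: powR_gt0.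
have Ey : y `^ v = (y / z) `^ v * z `^ v.
  rewrite -powRM; try lra. congr (_ `^ _). field. lra.
rewrite powRD; last by apply/implyP => _; rewrite gt_eqF.
rewrite powRr1; last lra.
have Q0 : 0 < (y / z) `^ v by apply: powR_gt0; apply: divr_gt0.
move: ((y / z) `^ v) Ey Q0 => Q Ey Q0.
move=> h.
have e1 : v * (y - z) / (y `^ v * y) = v * (1 - (y / z)^-1) / y `^ v.
  rewrite invf_div. move: (y `^ v) Y0 => Yv Yv0. field. rewrite !gt_eqF//.
rewrite e1.
have e2 : (z `^ v)^-1 - (y `^ v)^-1 = (Q - 1) / y `^ v.
  rewrite Ey. field. by rewrite !gt_eqF.
rewrite e2 ler_pM2r ?invr_gt0//.
Qed.

Lemma sum1d (L v : R) (N : nat) : 1 <= L -> 0 < v ->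
  \sum_(m < N.+1) ((1 + m%:R / L) `^ (v + 1))^-1 <= 1 + L / v.
Proof.
move=> L1 v0.
have L0 : 0 < L by lra.
rewrite big_ord_recl /= mul0r addr0 powR1 invr1 lerD2l.
pose g (i : nat) := ((1 + i%:R / L) `^ v)^-1.
have step : forall i : nat, ((1 + i.+1%:R / L) `^ (v + 1))^-1 <= L / v * (g i - g i.+1).
  move=> i.
  have z1 : 1 <= 1 + i%:R / L by rewrite lerDl; apply: divr_ge0 => //; lra.
  have zy : 1 + i%:R / L <= 1 + i.+1%:R / L by rewrite lerD2l ler_pM2r ?invr_gt0// ler_nat.
  have := @tele_step (1 + i.+1%:R / L) (1 + i%:R / L) v z1 zy v0.
  have e : 1 + i.+1%:R / L - (1 + i%:R / L) = L^-1 by rewrite -natr1; field; rewrite gt_eqF.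
  rewrite e /g.
  have Pp : 0 <= i.+1%:R / L by apply: divr_ge0 => //; lra.
  have P0 : 0 < (1 + i.+1%:R / L) `^ (v + 1) by apply: powR_gt0; lra.
  move: ((1 + i.+1%:R / L) `^ (v + 1)) P0 => P P0.
  move: (((1 + i%:R / L) `^ v)^-1) (((1 + i.+1%:R / L) `^ v)^-1) => a b h.
  have -> : P^-1 = L / v * (v * L^-1 / P) by field; rewrite !gt_eqF.
  by rewrite ler_pM2l ?divr_gt0.
apply: (@le_trans _ _ (\sum_(i < N) L / v * (g i - g i.+1))).
  by apply: ler_sum => i _; exact: step.
rewrite -mulr_sumr.
have -> : \sum_(i < N) (g i - g i.+1) = g 0%N - g N.
  rewrite -(big_mkord xpredT (fun i => g i - g i.+1)).
  rewrite -[RHS]opprB -telescope_sumr// -sumrN.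
  by apply: eq_bigr => i _; rewrite opprB.
rewrite -[X in _ <= X]mulr1 ler_pM2l ?divr_gt0//.
rewrite /g mul0r addr0 powR1 invr1 lerBlDr lerDl invr_ge0 powR_ge0 //.
Qed.

Lemma eq_leq_tmp (a b : R) : a = b -> a <= b. Proof. by move=> ->. Qed.

Definition G (t L : R) (j : int) := ((1 + (j%:~R / L) ^+ 2) `^ t)^-1.

Lemma G_ge0 t L j : 0 <= G t L j.
Proof. by rewrite /G invr_ge0 powR_ge0. Qed.

Lemma G_abs t L (j : int) : G t L j = G t L (`|j|%N%:Z).
Proof.
rewrite /G; congr ((1 + _) `^ _)^-1.
rewrite abszE intr_norm !expr_div_n; congr (_ / _).
by rewrite -normrX ger0_norm // sqr_ge0.
Qed.

Lemma G_nat t L (m : nat) : 1 <= L -> 0 <= t ->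
  G t L m%:Z <= 2 `^ t * ((1 + m%:R / L) `^ (2 * t))^-1.
Proof.
move=> L1 t0.
have L0 : 0 < L by lra.
have x0 : 0 <= m%:R / L by apply: divr_ge0 => //; lra.
rewrite /G.
move: x0; rewrite -[m%:~R]/(m%:R) ; move: (m%:R / L) => x x0.
have A0 : 0 < (1 + x ^+ 2) `^ t by apply: powR_gt0; have := sqr_ge0 x; lra.
have B0 : 0 < (1 + x) `^ (2 * t) by apply: powR_gt0; lra.
have key : (1 + x) `^ (2 * t) <= 2 `^ t * (1 + x ^+ 2) `^ t.
  rewrite -powRM; [|lra|have := sqr_ge0 x; lra].
  rewrite powRrM powR_mulrn; last lra.
  apply: ge0_ler_powR => //; rewrite ?nnegrE.
  - exact: sqr_ge0.
  - have := sqr_ge0 x; lra.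
  - have h := sqr_ge0 (1 - x); rewrite !expr2 in h *; nra.
move: key A0 B0; move: ((1 + x) `^ (2 * t)) ((1 + x ^+ 2) `^ t) (2 `^ t) => B A C key A0 B0.
rewrite -subr_ge0.
have -> : C * B^-1 - A^-1 = (C * A - B) / (A * B) by field; rewrite !gt_eqF.
apply: divr_ge0; [lra|]; apply: mulr_ge0; lra.
Qed.

Lemma sum_abs (F : nat -> R) (N : nat) : (forall m, 0 <= F m) ->
  \sum_(j < N.+1 + N) F (`|(j%:Z - N%:Z)%R|%N) <= 2 * \sum_(m < N.+1) F m.
Proof.
move=> F0.
rewrite big_split_ord /= mulr2n mulrDl mul1r.
apply: lerD.
  rewrite (reindex_inj rev_ord_inj) /=; apply/eq_leq_tmp/eq_bigr => i _; congr F.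
  have hi := ltn_ord i.
  rewrite distnEr; [lia|lia].
rewrite big_ord_recl -[X in X <= _]add0r; apply: lerD => //.
apply/eq_leq_tmp/eq_bigr => i _; congr F.
rewrite distnEl; [|lia]. rewrite lift0 /=; lia.
Qed.

Definition K1 (t : R) := 2 * 2 `^ t * (1 + (2 * t - 1)^-1).

Lemma box1d (t L : R) (N : nat) : 1 <= L -> 2^-1 < t ->
  \sum_(j < N.+1 + N) G t L (j%:Z - N%:Z) <= K1 t * L.
Proof.
move=> L1 t1.
have L0 : 0 < L by lra.
have v0 : 0 < 2 * t - 1 by lra.
under eq_bigr do rewrite G_abs.
apply: le_trans (sum_abs (fun m => G t L m%:Z) N (fun m => G_ge0 t L m%:Z)) _.
have h1 : \sum_(m < N.+1) G t L m%:Z <= 2 `^ t * \sum_(m < N.+1) ((1 + m%:R / L) `^ (2 * t - 1 + 1))^-1.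
  rewrite mulr_sumr; apply: ler_sum => m _.
  have -> : 2 * t - 1 + 1 = 2 * t by ring.
  apply: G_nat => //; lra.
have h2 := @sum1d L (2 * t - 1) N L1 v0.
have P0 : 0 < 2 `^ t by apply: powR_gt0.
have h3 : 1 + L / (2 * t - 1) <= (1 + (2 * t - 1)^-1) * L.
  have : 0 < (2 * t - 1)^-1 by rewrite invr_gt0.
  rewrite mulrDl mul1r mulrC. nra.
rewrite /K1 -mulrA -mulrA ler_pM2l; last lra.
apply: (le_trans h1).
rewrite ler_pM2l //.
exact: le_trans h2 h3.
Qed.

Lemma boxd (d N : nat) (Gf : int -> R) (s : seq {ffun 'I_d -> int}) :
  (forall j, 0 <= Gf j) -> uniq s -> (forall k, k \in s -> forall i, (`|k i| <= N)%N) ->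
  \sum_(k <- s) \prod_(i < d) Gf (k i) <= (\sum_(j < N.+1 + N) Gf (j%:Z - N%:Z)) ^+ d.
Proof.
move=> G0 us sb.
rewrite -[X in _ ^+ X](card_ord d) -prodr_const.
rewrite (bigA_distr_bigA (fun (i : 'I_d) (j : 'I_(N.+1 + N)) => Gf (j%:Z - N%:Z))) /=.
pose psi (k : {ffun 'I_d -> int}) : {ffun 'I_d -> 'I_(N.+1 + N)} := [ffun i => inord (absz (k i + N%:Z))].
have hpsi : forall k, k \in s -> forall i, ((psi k i)%:Z - N%:Z) = k i.
  move=> k ks i; have := sb k ks i; rewrite /psi ffunE inordK.
    move=> h; rewrite gez0_abs; first by rewrite addrK.
    move: h; case: (k i) => x /=; lia.
  change (absz (k i + N%:Z)%R < N.+1 + N)%N.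
  move: (sb k ks i); case: (k i) => x h; lia.
rewrite (eq_big_seq (fun k => \prod_(i < d) Gf ((psi k i)%:Z - N%:Z))); last first.
  by move=> k ks; apply: eq_bigr => i _; rewrite hpsi.
rewrite -(big_map psi xpredT (fun g => \prod_(i < d) Gf ((g i)%:Z - N%:Z))).
have um : uniq (map psi s).
  rewrite map_inj_in_uniq // => k1 k2 k1s k2s e.
  by apply/ffunP => i; rewrite -hpsi // e hpsi.
rewrite big_uniq // [X in _ <= X](bigID (fun g => g \in map psi s)) /= lerDl.
by apply: sumr_ge0 => g _; apply: prodr_ge0 => i _.
Qed.

Lemma latsq_ge0 (d : nat) (L : R) (k : {ffun 'I_d -> int}) : 0 <= latsq L k.
Proof. by apply: sumr_ge0 => i _; apply: sqr_ge0. Qed.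

Lemma prod_bound (d : nat) (L s0 : R) (k : {ffun 'I_d -> int}) : 0 <= s0 ->
  ((1 + latsq L k) `^ s0)^-1 <= \prod_(i < d) G (s0 / d%:R) L (k i).
Proof.
move=> s00.
case: d k => [|n] k.
  by rewrite /latsq !big_ord0 addr0 powR1 invr1.
have x0 := latsq_ge0 L k.
set x := latsq L k in x0 *.
set t := s0 / n.+1%:R.
have t0 : 0 <= t by apply: divr_ge0.
apply: (@le_trans _ _ (\prod_(i < n.+1) ((1 + x) `^ t)^-1)); last first.
  apply: ler_prod => i _; rewrite invr_ge0 powR_ge0 /=.
  have yi := sqr_ge0 ((k i)%:~R / L).
  rewrite /G lef_pV2 ?posrE; last 2 first.
  - by apply: powR_gt0; lra.
  - by apply: powR_gt0; lra.
  apply: ge0_ler_powR => //; rewrite ?nnegrE; try lra.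
  rewrite lerD2l /x /latsq (bigD1 i) //= lerDl.
  by apply: sumr_ge0 => j _; apply: sqr_ge0.
rewrite prodr_const card_ord exprVn -powR_mulrn; last exact: powR_ge0.
rewrite -powRrM /t mulfVK //.
Qed.

Lemma point_bound (d : nat) (L E eta tau : R) (k : {ffun 'I_d -> int}) :
  0 < E -> 0 < eta ->
  integrand L E eta tau k <= ((3 + 2 * E) ^+ 2 + 4) * (1 + eta ^- 2) * ((1 + latsq L k) `^ (2 - tau / 2))^-1.
Proof.
move=> E0 eta0.
rewrite /integrand.
have x0 := latsq_ge0 L k.
move: (latsq L k) x0 => x x0.
have P0 : 0 < (1 + x) `^ (tau / 2) by apply: powR_gt0; lra.
have Q0 : 0 < (1 + x) `^ (2 - tau / 2) by apply: powR_gt0; lra.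
have PQ : (1 + x) `^ (tau / 2) * (1 + x) `^ (2 - tau / 2) = (1 + x) ^+ 2.
  rewrite -powRD; last by apply/implyP => _; rewrite gt_eqF //; lra.
  have -> : tau / 2 + (2 - tau / 2) = 2%:R by ring.
  by rewrite powR_mulrn //; lra.
have e0 : 0 < eta ^+ 2 by apply: exprn_gt0.
have D0 : 0 < (x - E) ^+ 2 + eta ^+ 2 by have := sqr_ge0 (x - E); lra.
have key : (1 + x) ^+ 2 <= ((3 + 2 * E) ^+ 2 + 4) * (1 + eta ^- 2) * ((x - E) ^+ 2 + eta ^+ 2).
  have ep : eta ^- 2 * eta ^+ 2 = 1 by rewrite mulVf // gt_eqF.
  have ei : 0 < eta ^- 2 by rewrite invr_gt0.
  have sq := sqr_ge0 (x - E).
  set c := (3 + 2 * E) ^+ 2 + 4.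
  have c0 : 0 <= c by rewrite /c; have := sqr_ge0 (3 + 2 * E); lra.
  have h1 : c + c * (x - E) ^+ 2 <= c * (1 + eta ^- 2) * ((x - E) ^+ 2 + eta ^+ 2).
    have -> : c * (1 + eta ^- 2) * ((x - E) ^+ 2 + eta ^+ 2) =
      c * (x - E) ^+ 2 + c * (eta ^- 2 * eta ^+ 2) + c * eta ^+ 2 + c * eta ^- 2 * (x - E) ^+ 2 by ring.
    rewrite ep mulr1.
    have : 0 <= c * eta ^+ 2 by apply: mulr_ge0 => //; lra.
    have : 0 <= c * eta ^- 2 * (x - E) ^+ 2 by apply: mulr_ge0 => //; apply: mulr_ge0 => //; lra.
    lra.
  apply: le_trans h1.
  case: (lerP x (2 * E + 2)) => hx.
    have : (1 + x) ^+ 2 <= (3 + 2 * E) ^+ 2.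
      rewrite ler_sqr ?nnegrE; lra.
    have : 0 <= c * (x - E) ^+ 2 by apply: mulr_ge0.
    rewrite /c; lra.
  have : (1 + x) ^+ 2 <= 4 * (x - E) ^+ 2.
    have -> : 4 * (x - E) ^+ 2 = (2 * (x - E)) ^+ 2 by ring.
    rewrite ler_sqr ?nnegrE; lra.
  have : 4 * (x - E) ^+ 2 <= c * (x - E) ^+ 2.
    apply: ler_wpM2r => //; rewrite /c; have := sqr_ge0 (3 + 2 * E); lra.
  lra.
move: key PQ P0 Q0 D0.
move: ((1 + x) `^ (tau / 2)) ((1 + x) `^ (2 - tau / 2)) ((x - E) ^+ 2 + eta ^+ 2) (((3 + 2 * E) ^+ 2 + 4) * (1 + eta ^- 2)) => P Q D A key PQ P0 Q0 D0.
rewrite -subr_ge0.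
have -> : A * Q^-1 - P / D = (A * D - P * Q) / (Q * D) by field; rewrite !gt_eqF.
apply: divr_ge0; first lra.
by apply: mulr_ge0; lra.
Qed.

Lemma main_real (d : nat) (tau L E eta : R) (s : seq {ffun 'I_d -> int}) :
  0 <= tau -> tau < 4 - d%:R -> 1 <= L -> 0 < E -> 0 < eta -> uniq s ->
  \sum_(k <- s) integrand L E eta tau k <=
  ((3 + 2 * E) ^+ 2 + 4) * (1 + eta ^- 2) * (K1 ((2 - tau / 2) / d%:R) * L) ^+ d.
Proof.
move=> tau0 tau1 L1 E0 eta0 us.
set A := ((3 + 2 * E) ^+ 2 + 4) * (1 + eta ^- 2).
set s0 := 2 - tau / 2.
set t := s0 / d%:R.
have d0 : 0 <= d%:R :> R by [].
have s00 : 0 <= s0 by rewrite /s0; lra.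
have A0 : 0 <= A.
  rewrite /A; apply: mulr_ge0.
    have := sqr_ge0 (3 + 2 * E); lra.
  have : 0 <= eta ^- 2 by rewrite invr_ge0 exprn_ge0 //; lra.
  lra.
apply: (@le_trans _ _ (\sum_(k <- s) A * ((1 + latsq L k) `^ s0)^-1)).
  by apply: ler_sum => k _; apply: point_bound.
rewrite -mulr_sumr ler_wpM2l //.
apply: (@le_trans _ _ (\sum_(k <- s) \prod_(i < d) G t L (k i))).
  by apply: ler_sum => k _; apply: prod_bound.
pose N := \max_(k <- s) \max_(i < d) `|k i|%N.
have hb : forall k, k \in s -> forall i, (`|k i| <= N)%N.
  move=> k ks i.
  apply: (@leq_trans (\max_(i < d) `|k i|%N)).
    by rewrite (bigD1 i) //= leq_maxl.
  by rewrite /N (bigD1_seq k) //= leq_maxl.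
apply: (le_trans (@boxd d N (G t L) s (fun j => G_ge0 t L j) us hb)).
have [dz|dpos] := eqVneq d 0%N.
  by rewrite [X in _ <= _ ^+ X]dz [X in _ ^+ X <= _]dz !expr0.
have ht : 2^-1 < t.
  rewrite /t /s0 ltr_pdivlMr ?ltr0n ?lt0n //.
  move: tau1; lra.
apply: lerXn2r; rewrite ?nnegrE.
- by apply: sumr_ge0 => j _; apply: G_ge0.
- apply: mulr_ge0; last lra.
  rewrite /K1; apply: mulr_ge0; first by apply: mulr_ge0; [lra|apply: powR_ge0].
  have : 0 < (2 * t - 1)^-1 by rewrite invr_gt0; lra.
  lra.
exact: box1d.
Qed.
End S.

Unset Implicit Arguments.

Theorem lemma22 (R : realType) (d : nat) (hd : (d <= 3)%N) (tau : R)
    (htau0 : 0 <= tau) (htau1 : tau < 4 - d%:R) :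
  exists C : R -> R,
    (forall a b : R, 0 < a -> a <= b ->
       exists M : R, forall E : R, a <= E -> E <= b -> C E <= M) /\
    (forall E L eta : R, 0 < E -> 1 <= L -> 0 < eta ->
       (lat_integral d L E eta tau <= (C E * (1 + eta ^- 2))%:E)%E).
Proof.
set K := @K1 R ((2 - tau / 2) / d%:R) ^+ d.
have K0 : 0 <= K.
  rewrite /K; have [->|dpos] := eqVneq d 0%N; first by rewrite expr0.
  apply: exprn_ge0.
  have ht : 2^-1 < (2 - tau / 2) / d%:R.
    rewrite ltr_pdivlMr ?ltr0n ?lt0n //.
    move: htau1; lra.
  rewrite /K1; apply: mulr_ge0; first by apply: mulr_ge0; [lra|apply: powR_ge0].
  have : 0 < (2 * ((2 - tau / 2) / d%:R) - 1)^-1 by rewrite invr_gt0; lra.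
  lra.
exists (fun E => ((3 + 2 * E) ^+ 2 + 4) * K); split.
  move=> a b a0 ab; exists (((3 + 2 * b) ^+ 2 + 4) * K) => E aE Eb.
  apply: ler_wpM2r => //.
  have h1 : 0 <= 3 + 2 * E by lra.
  have h2 : 3 + 2 * E <= 3 + 2 * b by lra.
  rewrite lerD2r !expr2; nra.
move=> E L eta E0 L1 eta0.
have L0 : 0 < L by lra.
have Ld0 : 0 < L ^+ d by apply: exprn_gt0.
have hs : (\esum_(k in [set: {ffun 'I_d -> int}]) (integrand L E eta tau k)%:E <=
  (((3 + 2 * E) ^+ 2 + 4) * (1 + eta ^- 2) * (@K1 R ((2 - tau / 2) / d%:R) * L) ^+ d)%:E)%E.
  apply: ge_ereal_sup => _ [X [finX _] <-].
  rewrite fsbig_finite //= sumEFin lee_fin.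
  apply: main_real => //.
  exact: finmap.fset_uniq.
rewrite /lat_integral.
apply: le_trans (lee_wpmul2l _ hs) _; first by rewrite lee_fin invr_ge0; apply: ltW.
rewrite -EFinM lee_fin exprMn /K.
rewrite le_eqVlt; apply/orP; left; apply/eqP.
field. by rewrite !gt_eqF.
Qed.
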